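(* Let $\mathbb{T}$ be a time scale, $c\in\mathbb{R}$ a constant, $m\in\mathbb{N}$ ($m\ge1$), $\alpha\in\,]0,1]$, and $t\in\mathbb{T}_\kappa$. (i) If $f(t)=(t-c)^m$, then $$f^{\nabla^\alpha}(t)=\begin{cases}[t-\rho(t)]^{1-\alpha}\sum_{\nu=0}^{m-1}[\rho(t)-c]^\nu(t-c)^{m-1-\nu}&\text{if }\alpha\neq1,\\ \sum_{\nu=0}^{m-1}[\rho(t)-c]^\nu(t-c)^{m-1-\nu}&\text{if }\alpha=1.\end{cases}$$ (ii) If $g(t)=\frac1{(t-c)^m}$, then, provided $[\rho(t)-c](t-c)\neq0$, $$g^{\nabla^\alpha}(t)=\begin{cases}-[t-\rho(t)]^{1-\alpha}\sum_{\nu=0}^{m-1}\frac{1}{[\rho(t)-c]^{m-\nu}(t-c)^{\nu+1}}&\text{if }\alpha\neq1,\\ -\sum_{\nu=0}^{m-1}\frac{1}{[\rho(t)-c]^{m-\nu}(t-c)^{\nu+1}}&\text{if }\alpha=1.\end{cases}$$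
   Context: A time scale $\mathbb{T}$ is a nonempty closed subset of $\mathbb{R}$. $\rho(t)=\sup\{s\in\mathbb{T}: s<t\}$ (with $\sup\emptyset=\inf\mathbb{T}$), $\sigma(t)=\inf\{s\in\mathbb{T}:s>t\}$ (with $\inf\emptyset=\sup\mathbb{T}$), $f^\rho=f\circ\rho$. $\mathbb{T}_\kappa=\mathbb{T}\setminus\{\inf\mathbb{T}\}$ if $\inf\mathbb{T}$ is finite with $\sigma(\inf\mathbb{T})>\inf\mathbb{T}$, otherwise $\mathbb{T}_\kappa=\mathbb{T}$. $0^\gamma=0$ for $\gamma>0$. Let $A=\,]0,1]\cap\{1/q: q\text{ odd positive integer}\}$; for $\alpha=1/q\in A$, $x^\alpha$ is the real $q$-th root. For $t\in\mathbb{T}_\kappa$, $f^{\nabla^\alpha}(t)$ is the real number (if it exists) such that for every $\varepsilon>0$ there is $\delta>0$ with $\big|[f(s)-f^\rho(t)]-f^{\nabla^\alpha}(t)[s-\rho(t)]^\alpha\big|\le\varepsilon|s-\rho(t)|^\alpha$ for all $s\in\,]t-\delta,t+\delta[\,\cap\mathbb{T}$ if $\alpha\in A$, resp. all $s\in[t,t+\delta[\,\cap\mathbb{T}$ if $\alpha\notin A$ (nabla fractional derivative of order $\alpha$). *)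

(* Defs.v *)
From HB Require Import structures.
From mathcomp Require Import all_boot all_order all_algebra.
From mathcomp Require Import all_classical all_reals all_analysis.
Set Implicit Arguments. Unset Strict Implicit. Unset Printing Implicit Defensive.
Import Order.TTheory GRing.Theory Num.Theory.
Import numFieldNormedType.Exports.
Local Open Scope classical_set_scope.
Local Open Scope ring_scope.

Section TimeScale.
Variable R : realType.

Definition time_scale (T : set R) : Prop := T !=set0 /\ closed T.

Definition rho (T : set R) (t : R) : R :=
  if pselect ([set s | T s /\ s < t] !=set0) then sup [set s | T s /\ s < t]
  else inf T.

Definition sigma (T : set R) (t : R) : R :=
  if pselect ([set s | T s /\ t < s] !=set0) then inf [set s | T s /\ t < s]
  else sup T.

Definition Tkappa (T : set R) (t : R) : Prop :=
  T t /\ ~ (has_lbound T /\ inf T < sigma T (inf T) /\ t = inf T).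

Definition inA (alpha : R) : Prop := exists q : nat, odd q /\ alpha = (q%:R)^-1.

(* x^alpha: for alpha = 1/q in A, the real (odd) q-th root of x;
   otherwise the usual real power (only used for x >= 0), with 0^g = 0. *)
Definition fpow (alpha x : R) : R :=
  if pselect (inA alpha) then
    (if 0 <= x then x `^ alpha else - ((- x) `^ alpha))
  else x `^ alpha.

Definition nabla_frac_deriv (T : set R) (alpha : R) (f : R -> R) (t D : R) : Prop :=
  forall eps : R, 0 < eps -> exists2 delta : R, 0 < delta &
    forall s : R, T s ->
      (if pselect (inA alpha) then t - delta < s < t + delta
       else t <= s < t + delta) ->
      `| (f s - f (rho T t)) - D * fpow alpha (s - rho T t) |
        <= eps * `| s - rho T t | `^ alpha.

End TimeScale.

(* Main.v *)
Require Import Defs.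
From HB Require Import structures.
From mathcomp Require Import all_boot all_order all_algebra.
From mathcomp Require Import all_classical all_reals all_analysis.
From mathcomp Require Import ring lra zify.
Import Order.TTheory GRing.Theory Num.Theory.
Import numFieldNormedType.Exports.
Local Open Scope classical_set_scope.
Local Open Scope ring_scope.

Lemma rho_le (R : realType) (T : set R) t : T t -> rho T t <= t.
Proof.
move=> Tt; rewrite /rho; case: pselect => [ne|e].
  by apply: ge_sup => // s [_ /ltW].
have lb : lbound T t.
  move=> s Ts; rewrite leNgt; apply/negP => st; apply: e; by exists s.
by apply: ge_inf => //; exists t.
Qed.

Lemma inA1 (R : realType) : inA (1 : R).
Proof. by exists 1%N; rewrite invr1. Qed.

Lemma fpow1 (R : realType) (x : R) : fpow 1 x = x.
Proof.
rewrite /fpow; destruct (pselect (inA (1:R))) as [p|h]; last by exfalso; apply: h; exact: inA1.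
case: ifP => x0; first by rewrite powRr1.
by rewrite powRr1 ?opprK // oppr_ge0 ltW // ltNge x0.
Qed.

Lemma powR_cont (R : realType) (r a t : R) : r < t ->
  {for t, continuous (fun s => (s - r) `^ a)}.
Proof.
move=> rt.
have h : {for t, continuous (fun s : R => s - r)}.
  by apply: cvgB; [exact: cvg_id | exact: cvg_cst].
have h2 : {for t - r, continuous (fun x : R => x `^ a)}.
  apply/differentiable_continuous/derivable1_diffP/derivable_powR.
  by rewrite in_itv /= andbT subr_gt0.
exact: (continuous_comp h h2).
Qed.

Lemma powR_split (R : realType) (x a : R) : 0 <= x -> x = x `^ a * x `^ (1 - a).
Proof.
move=> x0; rewrite -powRD; last by rewrite addrC subrK oner_eq0.
by rewrite addrC subrK powRr1.
Qed.

Lemma fpow_ge0 (R : realType) (a x : R) : 0 <= x -> fpow a x = x `^ a.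
Proof. by move=> x0; rewrite /fpow; destruct (pselect (inA a)) as [p|p]; rewrite ?x0. Qed.

Lemma near_to_nfd (R : realType) (T : set R) alpha f t D :
  (forall eps, 0 < eps -> \forall s \near t,
    `|(f s - f (rho T t)) - D * fpow alpha (s - rho T t)|
      <= eps * `|s - rho T t| `^ alpha) ->
  nabla_frac_deriv T alpha f t D.
Proof.
move=> H eps e0; have /nbhs_normP [d /= d0 Hd] := H eps e0.
exists d => // s _ Hw; apply: Hd => /=.
rewrite ltr_distlC; destruct (pselect (inA alpha)) as [p|p] => //.
case/andP: Hw => ts ->; rewrite andbT.
by rewrite (lt_le_trans _ ts) // ltrBlDr ltrDl.
Qed.

Lemma near2 {T : Type} {F : set_system T} {FF : Filter F} {P Q S : T -> Prop} :
  (\forall x \near F, P x) -> (\forall x \near F, Q x) ->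
  (forall x, P x -> Q x -> S x) -> \forall x \near F, S x.
Proof. by move=> HP HQ H; exact: (filterS2 FF H HP HQ). Qed.

Lemma core (R : realType) (T : set R) (alpha : R) (f G : R -> R) (t r : R) :
  rho T t = r -> r <= t -> 0 < alpha <= 1 ->
  {for t, continuous G} ->
  (\forall s \near t, f s - f r = (s - r) * G s) ->
  nabla_frac_deriv T alpha f t
    (if alpha != 1 then (t - r) `^ (1 - alpha) * G t else G t).
Proof.
move=> rhoE rt /andP[a0 a1] Gc fE; apply: near_to_nfd; rewrite rhoE => eps e0; clear rhoE.
have HG := Gc; move/cvgrPdist_lt in HG.
case: (eqVneq alpha 1) => [-> | an1].
  apply: (near2 fE (HG eps e0)) => s e1 e2.
  rewrite fpow1 powRr1 // e1 (mulrC (G t)) -mulrBr normrM mulrC.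
  by rewrite ler_wpM2r // distrC ltW.

have a1' : 0 < 1 - alpha by rewrite subr_gt0 lt_neqAle an1 a1.
have a1c := a1'.
case: (eqVneq r t) => [rt'|rnt] /=.
  subst r; rewrite /= subrr powR0 ?gt_eqF // mul0r.
  set M := `|G t| + 1.
  have M0 : 0 < M by rewrite ltr_pwDr.
  set d := (eps / M) `^ ((1 - alpha)^-1).
  have d0 : 0 < d by rewrite powR_gt0 // divr_gt0.
  have Hd : \forall s \near t, `|t - s| < d.
    by apply/nbhs_normP; exists d.
  apply: (near2 (near2 fE (HG 1 ltr01) (fun s x y => conj x y)) Hd).
  move=> s [e1 e2] e3.
  rewrite mul0r subr0 e1 normrM.
  have Gs : `|G s| <= M.
    rewrite /M (le_trans (_ : _ <= `|G t| + `|G s - G t|)) //.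
      by rewrite -{1}(subrK (G t) (G s)) addrC (le_trans (ler_normD _ _)) // addrC.
    by rewrite lerD2l distrC ltW.
  have P1 : `|s - t| `^ (1 - alpha) <= eps / M.
    have -> : eps / M = d `^ (1 - alpha).
      by rewrite /d -powRrM mulVf ?gt_eqF // powRr1 // ltW // divr_gt0.
    apply: ge0_ler_powR; rewrite ?nnegrE ?(ltW a1c) ?(ltW d0) //; rewrite distrC; exact: ltW.
  rewrite {1}(@powR_split _ _ alpha (normr_ge0 (s - t))) -mulrA mulrC.
  apply: ler_wpM2r; first exact: powR_ge0.
  rewrite (le_trans (ler_pM _ _ P1 Gs)) ?powR_ge0 //.
  by rewrite mulfVK ?gt_eqF.
have rlt : r < t by rewrite lt_neqAle rnt rt.
have phic : {for t, continuous (fun s => (s - r) `^ (1 - alpha) * G s)}.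
  exact: (continuousM (@powR_cont _ r (1 - alpha) t rlt) Gc).
move/cvgrPdist_lt: phic => /(_ eps e0) Hp.
apply: (near2 (near2 fE Hp (fun s x y => conj x y)) (lt_nbhsr rlt)).
move=> s [e1 e2] rs.
have sr0 : 0 <= s - r by rewrite subr_ge0 ltW.
rewrite e1 fpow_ge0 // (ger0_norm sr0).
rewrite {1}(@powR_split _ _ alpha sr0) -mulrA mulrC (mulrC _ ((s - r) `^ alpha)).
rewrite [X in _ - X]mulrC -mulrBr normrM (ger0_norm (powR_ge0 _ _)) mulrC ler_wpM2r ?powR_ge0 //.
by rewrite distrC ltW.
Qed.
Lemma subc_cont (R : realType) (c t : R) : {for t, continuous (fun s : R => s - c)}.
Proof. by apply: cvgB; [exact: cvg_id | exact: cvg_cst]. Qed.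

Lemma powc_cont (R : realType) (c : R) (k : nat) (t : R) :
  {for t, continuous (fun s : R => (s - c) ^+ k)}.
Proof.
exact: (continuous_comp (@subc_cont R c t) (@exprn_continuous R k (t - c))).
Qed.

Lemma sum_cont (R : realType) (F : nat -> R -> R) (n : nat) (t : R) :
  (forall i, {for t, continuous (F i)}) ->
  {for t, continuous (fun s => \sum_(0 <= i < n) F i s)}.
Proof.
move=> H; elim: n => [|n IH].
  have -> : (fun s => \sum_(0 <= i < 0) F i s) = (fun=> 0).
    by apply: funext => s; rewrite big_geq.
  exact: cst_continuous.
have -> : (fun s => \sum_(0 <= i < n.+1) F i s) =
          (fun s => \sum_(0 <= i < n) F i s + F n s).
  by apply: funext => s; rewrite big_nat_recr.
exact: continuousD.
Qed.

Lemma Gcont (R : realType) (r c t : R) (m : nat) :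
  {for t, continuous (fun s => \sum_(0 <= nu < m) (r - c) ^+ nu * (s - c) ^+ (m.-1 - nu))}.
Proof.
apply: sum_cont => i.
apply: continuousM; first exact: cst_continuous.
exact: powc_cont.
Qed.

Lemma Gid (R : realType) (r c s : R) (m : nat) :
  (s - c) ^+ m - (r - c) ^+ m =
  (s - r) * \sum_(0 <= nu < m) (r - c) ^+ nu * (s - c) ^+ (m.-1 - nu).
Proof.
rewrite subrXX opprB addrA subrK big_mkord; congr (_ * _).
by apply: eq_bigr => i _; rewrite mulrC.
Qed.

Theorem theorem3p11 (R : realType) (T : set R) (c : R) (m : nat) (alpha t : R) :
  time_scale T -> (0 < m)%N -> 0 < alpha <= 1 -> Tkappa T t ->
  nabla_frac_deriv T alpha (fun s => (s - c) ^+ m) t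
    (if alpha != 1 then
       (t - rho T t) `^ (1 - alpha) *
         \sum_(0 <= nu < m) (rho T t - c) ^+ nu * (t - c) ^+ (m.-1 - nu)
     else \sum_(0 <= nu < m) (rho T t - c) ^+ nu * (t - c) ^+ (m.-1 - nu))
  /\
  ((rho T t - c) * (t - c) != 0 ->
   nabla_frac_deriv T alpha (fun s => ((s - c) ^+ m)^-1) t
    (if alpha != 1 then
       - ((t - rho T t) `^ (1 - alpha) *
         \sum_(0 <= nu < m) ((rho T t - c) ^+ (m - nu) * (t - c) ^+ nu.+1)^-1)
     else - \sum_(0 <= nu < m) ((rho T t - c) ^+ (m - nu) * (t - c) ^+ nu.+1)^-1)).
Proof.
move=> _ m0 ha [Tt _].
have rt := @rho_le R T t Tt.
set r := rho T t.
set G := fun s => \sum_(0 <= nu < m) (r - c) ^+ nu * (s - c) ^+ (m.-1 - nu).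
split.
  apply: (@core R T alpha (fun s => (s - c) ^+ m) G t r) => //.
    exact: Gcont.
  by near=> s; rewrite /G Gid.
rewrite mulf_eq0 negb_or => /andP[rc tc].
set G2 := fun s => - (G s * ((s - c) ^+ m * (r - c) ^+ m)^-1).
have hy : (r - c) ^+ m != 0 by rewrite expf_neq0.
have hx : (t - c) ^+ m != 0 by rewrite expf_neq0.
have eqG : G2 t = - \sum_(0 <= nu < m) ((r - c) ^+ (m - nu) * (t - c) ^+ nu.+1)^-1.
  rewrite /G2 /G big_distrl; congr (- _); apply: eq_big_nat => nu /andP[_ hnu].
  have e1 : (r - c) ^+ m = (r - c) ^+ nu * (r - c) ^+ (m - nu).
    by rewrite -exprD subnKC // ltnW.
  have e2 : (t - c) ^+ m = (t - c) ^+ (m.-1 - nu) * (t - c) ^+ nu.+1.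
    by rewrite -exprD; congr (_ ^+ _); lia.
  have hy1 : (r - c) ^+ nu != 0 by rewrite expf_neq0.
  have hy2 : (r - c) ^+ (m - nu) != 0 by rewrite expf_neq0.
  have hx1 : (t - c) ^+ (m.-1 - nu) != 0 by rewrite expf_neq0.
  have hx2 : (t - c) ^+ nu.+1 != 0 by rewrite expf_neq0.
  rewrite /= e1 e2; field.
  by rewrite hy1 hy2 hx1 hx2.
have Hc : {for t, continuous G2}.
  apply: continuousN; apply: continuousM; first exact: Gcont.
  apply: continuousV; first by rewrite mulf_neq0.
  apply: continuousM; first exact: powc_cont.
  exact: cst_continuous.
have Hn : \forall s \near t, s != c.
  apply/nbhs_normP; exists `|t - c|; first by rewrite /= normr_gt0.
  move=> s /= hs; apply/negP => /eqP sc; by move: hs; rewrite sc ltxx.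
have := @core R T alpha (fun s => ((s - c) ^+ m)^-1) G2 t r erefl rt ha Hc.
rewrite eqG mulrN; apply.
apply: filterS Hn => s sc.
have hs : (s - c) ^+ m != 0 by rewrite expf_neq0 // subr_eq0.
rewrite /G2 /G mulrN mulrA -Gid.
move: hs hy; set X := (s - c) ^+ m; set Y := (r - c) ^+ m => hs hy'.
field.
by rewrite hs hy'.
Unshelve. all: end_near. Qed.
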